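(* Let $G$ be an arbitrary group and $E$ a real Banach space. Then $KJ(G;E)=PJ(G;E)\oplus B(G;E)$ (direct sum of linear subspaces).
   Context: $KJ(G;E)$ is the real vector space of functions $f\colon G\to E$ for which there exists $c>0$ with $\|f(xy)+f(xy^{-1})-2f(x)\|\le c$ for all $x,y\in G$ (quasi-Jensen functions). $PJ(G;E)$ is the subspace of $f\in KJ(G;E)$ with $f(x^n)=nf(x)$ for all $x\in G$, $n\in\mathbb{Z}$ (pseudo-Jensen functions). $B(G;E)$ is the space of bounded functions $G\to E$. *)

(* Defs.v *)
From HB Require Import structures.
From mathcomp Require Import all_boot all_order all_algebra.
From mathcomp Require Import all_classical all_reals all_analysis.
Set Implicit Arguments. Unset Strict Implicit. Unset Printing Implicit Defensive.
Import Order.TTheory GRing.Theory Num.Theory.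
Import numFieldNormedType.Exports.
Local Open Scope ring_scope.

Definition gpowz (G : groupType) (x : G) (n : int) : G :=
  match n with
  | Posz k => (x ^+ k)%g
  | Negz k => (x ^- k.+1)%g
  end.

Section Jensen.
Variables (R : realType) (G : groupType) (E : normedModType R).

Definition quasi_jensen (f : G -> E) : Prop :=
  exists c : R, 0 < c /\
    forall x y : G, `| f (x * y)%g + f (x * y^-1)%g - f x *+ 2 | <= c.

Definition pseudo_jensen (f : G -> E) : Prop :=
  quasi_jensen f /\ forall (x : G) (n : int), f (gpowz x n) = f x *~ n.

Definition bounded_map (f : G -> E) : Prop :=
  exists M : R, forall x : G, `| f x | <= M.
End Jensen.

(* Main.v *)
Require Import Defs.
From HB Require Import structures.
From mathcomp Require Import all_boot all_order all_algebra.
From mathcomp Require Import all_classical all_reals all_analysis.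
Import Order.TTheory GRing.Theory Num.Theory.
Import numFieldNormedType.Exports.
Local Open Scope ring_scope.
From mathcomp Require Import lra.
Local Open Scope classical_set_scope.

Lemma arch0 (R : realType) (a M : R) : 0 <= a -> (forall n : nat, a * n%:R <= M) -> a = 0.
Proof.
move=> a0 H; apply/eqP; rewrite eq_le a0 andbT; apply/negP => /negP; rewrite -ltNge => apos.
have := H (Num.Def.truncn (M / a)).+1.
have := truncnS_gt (M / a).
rewrite ltr_pdivrMr // => h1 h2.
have : M < M by apply: (lt_le_trans _ h2); rewrite mulrC.
by rewrite ltxx.
Qed.

Lemma commsq (G : groupType) (u v : G) : commute u v ->
  ((u * u) * (v * v) = (u * v) * (u * v))%g.
Proof. by move=> h; rewrite !mulgA; congr (_ * _)%g; rewrite -!mulgA h. Qed.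

Lemma jensen_comm (R : realType) (G : groupType) (E : normedModType R) (p : G -> E) (C : R) :
 (forall x y, `|p (x*y)%g + p (x*y^-1)%g - p x *+ 2| <= C) ->
 (forall x, p (x*x)%g = p x *+ 2) ->
 forall u v : G, commute u v -> p (u*v)%g + p (u*v^-1)%g - p u *+ 2 = 0.
Proof.
move=> HC Hsq.
have key : forall n (u v : G), commute u v ->
   `|p (u*v)%g + p (u*v^-1)%g - p u *+ 2| * (2 ^+ n) <= C.
  elim=> [|n IH] u v huv; first by rewrite expr0 mulr1.
  have huv' : commute (u*u)%g (v*v)%g.
    apply: commuteM; apply: commute_sym; apply: commuteM; exact: commute_sym.
  have := IH _ _ huv'.
  have e1 := @commsq G u v huv.
  have e2 : ((u*u) * (v*v)^-1 = (u*v^-1) * (u*v^-1))%g.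
    rewrite -commsq; last exact: commuteV.
    by rewrite invgM.
  rewrite e1 e2 !Hsq -mulrnDl -mulrnBl normrMn exprS mulrA mulr_natr.
  by [].
move=> u v huv; apply/normr0_eq0; apply: (@arch0 R _ C) => // n.
apply: le_trans (key n u v huv).
apply: ler_wpM2l => //.
rewrite -natrX ler_nat; exact: ltnW (ltn_expl _ _).
Qed.

Definition sqi (G : groupType) (n : nat) (x : G) : G := iter n (fun z => (z * z)%g) x.
Arguments sqi {G}.
Definition hy (R : realType) (G : groupType) (E : normedModType R) (f : G -> E)
  (n : nat) (x : G) : E := ((2:R)^-1)^+n *: f (sqi n x).
Arguments hy {R G E}.

Lemma hy_step (R : realType) (G : groupType) (E : normedModType R) (f : G -> E) (c : R) :
  (forall x, `|f (x*x)%g - f x *+ 2| <= c) ->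
  forall n x, `|hy f n.+1 x - hy f n x| <= c * ((2:R)^-1)^+n.+1.
Proof.
move=> Hc n x; rewrite /hy /sqi iterS.
set y := iter n _ x.
have -> : ((2:R)^-1)^+n *: f y = ((2:R)^-1)^+n.+1 *: (f y *+ 2).
  by rewrite -[f y *+ 2]scaler_nat scalerA exprSr -mulrA mulVf ?mulr1 // pnatr_eq0.
rewrite -scalerBr normrZ mulrC ger0_norm; last by rewrite exprn_ge0 // invr_ge0.
by apply: ler_wpM2r => //; rewrite exprn_ge0 // invr_ge0.
Qed.

Lemma hy_cauchy (R : realType) (G : groupType) (E : normedModType R) (f : G -> E) (c : R) :
  (forall x, `|f (x*x)%g - f x *+ 2| <= c) ->
  forall n k x, `|hy f (n + k) x - hy f n x| <= c * (((2:R)^-1)^+n - ((2:R)^-1)^+(n+k)).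
Proof.
move=> Hc n k x; elim: k => [|k IH]; first by rewrite addn0 subrr normr0 subrr mulr0.
rewrite addnS.
have h := @hy_step R G E f c Hc (n + k) x.
have -> : hy f (n + k).+1 x - hy f n x =
   (hy f (n + k).+1 x - hy f (n+k) x) + (hy f (n + k) x - hy f n x).
  by rewrite addrA subrK.
apply: le_trans (ler_normD _ _) _.
have e : ((2:R)^-1)^+(n+k).+1 = ((2:R)^-1)^+(n+k) / 2 by rewrite exprSr.
rewrite e in h *.
set t := ((2:R)^-1)^+(n+k) in h IH *.
set s := ((2:R)^-1)^+n in IH *.
lra.
Qed.

Lemma small_pow (R : realType) (c eps : R) : 0 < eps -> exists N : nat, c * ((2:R)^-1)^+N < eps.
Proof.
move=> e0; set N := (Num.Def.truncn (c / eps)).+1.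
exists N.
have h1 := truncnS_gt (c / eps); rewrite ltr_pdivrMr // -/N in h1.
rewrite exprVn -/(c / _) ltr_pdivrMr ?exprn_gt0 //.
apply: (lt_le_trans h1); rewrite mulrC; apply: ler_wpM2l; first exact: ltW.
rewrite -natrX ler_nat; exact: ltnW (ltn_expl _ _).
Qed.

Lemma hy_cvg (R : realType) (G : groupType) (E : completeNormedModType R) (f : G -> E) (c : R) :
  (forall x, `|f (x*x)%g - f x *+ 2| <= c) ->
  forall x, cvg (hy f ^~ x @ \oo).
Proof.
move=> Hc x; apply: cauchy_cvg; apply: cauchy_exP => eps e0.
have [N HN] := @small_pow R c eps e0.
exists (hy f N x).
exists N => // n /= Hn.
rewrite -ball_normE /ball_ /=.
rewrite -(subnKC Hn) distrC.
apply: le_lt_trans (@hy_cauchy R G E f c Hc N (n - N) x) _.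
apply: le_lt_trans HN.
have hp : 0 <= ((2:R)^-1)^+(N + (n - N)) by rewrite exprn_ge0 // invr_ge0.
have c0 : 0 <= c by apply: le_trans (Hc x); exact: normr_ge0.
rewrite ler_wpM2l // lerBlDr lerDl //.
Qed.

Lemma sub4 (V : zmodType) (X Y Z W : V) : (X - Y) - (Z - W) = (X - Z) - (Y - W).
Proof. by rewrite !opprB addrACA [RHS]addrACA [(- Z) + _]addrC. Qed.

Lemma subKr' (V : zmodType) (x y : V) : y = x - (x - y).
Proof. by rewrite opprB addrC subrK. Qed.

Lemma hyers (R : realType) (G : groupType) (E : completeNormedModType R) (f : G -> E) (c : R) :
  0 < c -> (forall x y, `|f (x*y)%g + f (x*y^-1)%g - f x *+ 2| <= c) ->
  exists p : G -> E, pseudo_jensen p /\ (forall x, `|f x - p x| <= c + `|f 1%g|).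
Proof.
move=> c0 Hc.
set c' := c + `|f 1%g|.
have c'0 : 0 < c' by rewrite /c'; apply: (lt_le_trans c0); rewrite lerDl.
have Hsq : forall x, `|f (x*x)%g - f x *+ 2| <= c'.
  move=> x; have := Hc x x; rewrite mulgV => h.
  have -> : f (x*x)%g - f x *+ 2 = (f (x*x)%g + f 1%g - f x *+ 2) - f 1%g.
    by rewrite addrAC addrK.
  by apply: le_trans (ler_normB _ _) _; rewrite lerD2r.
pose p x := lim (hy f ^~ x @ \oo).
have Hp x : hy f ^~ x @ \oo --> p x := @hy_cvg R G E f c' Hsq x.
have Hb x : `|f x - p x| <= c'.
  have Hn : (fun n => `|f x - hy f n x|) @ \oo --> `|f x - p x|.
    exact: (cvg_norm (cvgB (cvg_cst (f x)) (Hp x))).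
  apply: (cvgr_to_le Hn).
  apply: filterE => n.
  have := @hy_cauchy R G E f c' Hsq 0 n x.
  rewrite /= add0n distrC.
  have -> : hy f 0 x = f x by rewrite /hy /sqi expr0 scale1r.
  move/le_trans; apply.
  rewrite expr0; have : 0 <= ((2:R)^-1)^+n by rewrite exprn_ge0 // invr_ge0.
  set t := _ ^+ n; nra.
have Hsqp x : p (x*x)%g = p x *+ 2.
  have Hs : (fun n => hy f n.+1 x) @ \oo --> p x.
    by have := Hp x; rewrite -cvg_shiftS.
  have e : hy f ^~ (x*x)%g = (fun n => hy f n.+1 x + hy f n.+1 x).
    apply: funext => n; rewrite -mulr2n /hy /sqi iterSr scalerMnl; congr (_ *: _).
    have h2 : (2:R)^-1 *+ 2 = 1 by rewrite mulr2n; lra.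
    by rewrite exprSr -mulrnAr h2 mulr1.
  rewrite mulr2n; apply: norm_cvg_lim; rewrite e; exact: (cvgD Hs Hs).
have HJ : forall x y, `|p (x*y)%g + p (x*y^-1)%g - p x *+ 2| <= c + c' *+ 4.
  move=> x y.
  set a := (x*y)%g; set b := (x*y^-1)%g.
  have D : (f a + f b - f x *+ 2) - (p a + p b - p x *+ 2) =
           (f a - p a) + (f b - p b) - (f x - p x) *+ 2.
    by rewrite sub4 mulrnBl opprD addrACA.
  have -> : p a + p b - p x *+ 2 =
     (f a + f b - f x *+ 2) - ((f a + f b - f x *+ 2) - (p a + p b - p x *+ 2)).
    exact: subKr'.
  rewrite D; apply: le_trans (ler_normB _ _) _; apply: lerD; first exact: Hc.
  apply: le_trans (ler_normB _ _) _; rewrite normrMn.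
  apply: le_trans (lerD (ler_normD _ _) (lexx _)) _.
  have := Hb a; have := Hb b; have := Hb x.
  rewrite -mulr_natr; lra.
have Hsq0 : forall x y, `|p (x*y)%g + p (x*y^-1)%g - p x *+ 2| <= c + c' *+ 4 := HJ.
have J0 := @jensen_comm R G E p (c + c' *+ 4) HJ Hsqp.
have p1 : p 1%g = 0.
  have := Hsqp 1%g; rewrite mulg1 mulr2n => h.
  by have := congr1 (fun z => z - p 1%g) h; rewrite addrK subrr.
have pV : forall v, p (v^-1)%g = - p v.
  move=> v; have := J0 1%g v (commute_sym (commute1 v)).
  rewrite !mul1g p1 mul0rn subr0 => /eqP; rewrite addr_eq0 => /eqP ->; by rewrite opprK.
have pX : forall (x : G) k, p (x ^+ k)%g = p x *+ k /\ p (x ^+ k.+1)%g = p x *+ k.+1.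
  move=> x; elim=> [|k [IH1 IH2]]; first by rewrite expg0 p1 mulr0n expg1 mulr1n.
  split => //.
  have hc : commute (x ^+ k.+1)%g x by apply: commute_sym; apply: commuteX.
  have := J0 _ _ hc.
  have e3 : (x ^+ k.+1 / x = x ^+ k)%g by rewrite expgSr mulgK.
  rewrite -expgSr e3 IH1 IH2 => /eqP; rewrite subr_eq0 => /eqP.
  move=> h; apply: (addIr (p x *+ k)); rewrite h.
  by rewrite mulr2n -!mulrnDr; congr (_ *+ _); rewrite !addSn !addnS.
exists p; split; last by [].
split.
  exists (c + c' *+ 4); split => //.
  by apply: ltr_wpDr => //; rewrite mulrn_wge0 // ltW.
move=> x [k|k] /=.
  by rewrite (pX x k).1 pmulrn.
by rewrite pV (pX x k).2 NegzE mulrNz pmulrn.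
Qed.

Lemma addJ (V : zmodType) (a b c a' b' c' : V) :
  (a + a') + (b + b') - (c + c') *+ 2 = (a + b - c *+ 2) + (a' + b' - c' *+ 2).
Proof. by rewrite [RHS]addrACA -opprD -mulrnDl [a + b + _]addrACA. Qed.

Theorem theorem2p10 (R : realType) (G : groupType) (E : completeNormedModType R) :
  (forall f : G -> E,
     quasi_jensen f <->
     exists p b : G -> E,
       pseudo_jensen p /\ bounded_map b /\ f = (fun x => p x + b x)) /\
  (forall f : G -> E,
     pseudo_jensen f -> bounded_map f -> f = (fun _ => 0)).
Proof.
split.
  move=> f; split.
    case=> c [c0 Hc].
    have [p [pj Hb]] := @hyers R G E f c c0 Hc.
    exists p, (fun x => f x - p x); split => //; split.
      by exists (c + `|f 1%g|).
    by apply: funext => x; rewrite addrC subrK.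
  case=> p [b [[[c [c0 Hc]] _] [[M HM] ->]]].
  have M0 : 0 <= M by apply: le_trans (HM 1%g).
  exists (c + M *+ 4); split.
    by apply: ltr_wpDr => //; rewrite mulrn_wge0.
  move=> x y; rewrite addJ; apply: le_trans (ler_normD _ _) _.
  apply: lerD; first exact: Hc.
  apply: le_trans (ler_normB _ _) _; rewrite normrMn.
  apply: le_trans (lerD (ler_normD _ _) (lexx _)) _.
  have := HM (x * y)%g; have := HM (x * y^-1)%g; have := HM x.
  rewrite -mulr_natr; lra.
move=> f [_ hom] [M HM]; apply: funext => x.
apply/normr0_eq0; apply: (@arch0 R _ M) => // n.
by have := HM (gpowz x n); rewrite hom pmulrn normrMn -mulr_natr.
Qed.
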